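(* Let $\mathfrak{N}$ be a pseudo-Euclidean 2-step nilpotent Lie algebra with Ricci curvature $\mathfrak{r}$, and suppose there exists $\lambda\in\mathbb{R}$ such that $\mathfrak{r}=\lambda\langle\cdot,\cdot\rangle$. Then $\lambda=0$.
   Context: A pseudo-Euclidean Lie algebra is a finite-dimensional real Lie algebra with a nondegenerate symmetric bilinear form $\langle\cdot,\cdot\rangle$. It is 2-step nilpotent if $0\ne[\mathfrak{N},\mathfrak{N}]\subset\mathfrak{Z}$ (the center). The Levi-Civita product is defined by $2\langle\mathcal{D}_uv,w\rangle=\langle[u,v],w\rangle+\langle[w,u],v\rangle+\langle[w,v],u\rangle$, the curvature by $\mathcal{R}(u,v)w=\mathcal{D}_{[u,v]}w-\mathcal{D}_u\mathcal{D}_vw+\mathcal{D}_v\mathcal{D}_uw$, and the Ricci curvature by $\mathfrak{r}(u,v)=\mathrm{tr}(w\mapsto\mathcal{R}(u,w)v)$. *)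

(* Defs.v *)
From HB Require Import structures.
From mathcomp Require Import all_boot all_order all_algebra.
From mathcomp Require Import reals.
Set Implicit Arguments. Unset Strict Implicit. Unset Printing Implicit Defensive.
Import Order.TTheory GRing.Theory Num.Theory.
Local Open Scope ring_scope.

Section PseudoEuclideanLie.
Variables (R : realType) (n : nat).
Notation V := 'rV[R]_n.

Definition is_lie_bracket (br : V -> V -> V) : Prop :=
  [/\ (forall (a : R) (x y z : V), br (a *: x + y) z = a *: br x z + br y z),
      (forall x y : V, br x y = - br y x) &
      (forall x y z : V, br x (br y z) + br y (br z x) + br z (br x y) = 0)].

Definition is_nondeg_sym_form (B : V -> V -> R) : Prop :=
  [/\ (forall (a : R) (x y z : V), B (a *: x + y) z = a * B x z + B y z),
      (forall x y : V, B x y = B y x) &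
      (forall x : V, (forall y : V, B x y = 0) -> x = 0)].

Definition two_step_nilpotent (br : V -> V -> V) : Prop :=
  (exists x y : V, br x y != 0) /\ (forall x y z : V, br (br x y) z = 0).

(* D is the Levi-Civita product:
   2 <D_u v, w> = <[u,v],w> + <[w,u],v> + <[w,v],u>.
   (By nondegeneracy of B there is exactly one such D.) *)
Definition is_levi_civita (br : V -> V -> V) (B : V -> V -> R)
  (D : V -> V -> V) : Prop :=
  forall u v w : V,
    2 * B (D u v) w = B (br u v) w + B (br w u) v + B (br w v) u.

Definition curvature (br : V -> V -> V) (D : V -> V -> V) (u v w : V) : V :=
  D (br u v) w - D u (D v w) + D v (D u w).

Definition ricci (br : V -> V -> V) (D : V -> V -> V) (u v : V) : R :=
  \tr (lin1_mx (fun w : V => curvature br D u w v)).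

End PseudoEuclideanLie.

(* Main.v *)
Require Import Defs.
From HB Require Import structures.
From mathcomp Require Import all_boot all_order all_algebra.
From mathcomp Require Import reals.
From mathcomp Require Import ring lra.
Import Order.TTheory GRing.Theory Num.Theory.
Local Open Scope ring_scope.
Set Implicit Arguments. Unset Strict Implicit. Unset Printing Implicit Defensive.

Section Gen.
Variables (R : realType) (n : nat).
Local Notation V := 'rV[R]_n.

Definition linV (f : V -> V) := forall (a : R) x y, f (a *: x + y) = a *: f x + f y.
Definition linR (f : V -> R) := forall (a : R) x y, f (a *: x + y) = a * f x + f y.

Lemma linV0 f : linV f -> f 0 = 0.
Proof. move=> h; have := h 1 0 0; rewrite !scale1r addr0 -{1}[f 0]addr0 => /addrI; done. Qed.
Lemma linVD f : linV f -> forall x y, f (x + y) = f x + f y.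
Proof. by move=> h x y; rewrite -[x]scale1r h !scale1r. Qed.
Lemma linVZ f : linV f -> forall a x, f (a *: x) = a *: f x.
Proof. by move=> h a x; rewrite -[a *: x]addr0 h linV0 // addr0. Qed.
Lemma linVN f : linV f -> forall x, f (- x) = - f x.
Proof. by move=> h x; rewrite -scaleN1r linVZ // scaleN1r. Qed.
Lemma linVB f : linV f -> forall x y, f (x - y) = f x - f y.
Proof. by move=> h x y; rewrite linVD // linVN. Qed.
Lemma linV_sum f (I : finType) (c : I -> R) (v : I -> V) : linV f ->
  f (\sum_i c i *: v i) = \sum_i c i *: f (v i).
Proof.
move=> h; elim/big_rec2: _ => [|i y1 y2 _ <-]; first exact: linV0.
by rewrite h.
Qed.
Lemma linV_sum' f (I : finType) (v : I -> V) : linV f ->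
  f (\sum_i v i) = \sum_i f (v i).
Proof.
move=> h; elim/big_rec2: _ => [|i y1 y2 _ <-]; first exact: linV0.
by rewrite linVD.
Qed.

Lemma linR0 f : linR f -> f 0 = 0.
Proof. move=> h; have := h 1 0 0; rewrite scale1r addr0 mul1r -{1}[f 0]addr0 => /addrI; done. Qed.
Lemma linRD f : linR f -> forall x y, f (x + y) = f x + f y.
Proof. by move=> h x y; rewrite -[x]scale1r h !scale1r mul1r. Qed.
Lemma linRZ f : linR f -> forall a x, f (a *: x) = a * f x.
Proof. by move=> h a x; rewrite -[a *: x]addr0 h linR0 // addr0. Qed.
Lemma linRN f : linR f -> forall x, f (- x) = - f x.
Proof. by move=> h x; rewrite -scaleN1r linRZ // mulN1r. Qed.
Lemma linRB f : linR f -> forall x y, f (x - y) = f x - f y.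
Proof. by move=> h x y; rewrite linRD // linRN. Qed.
Lemma linR_sum f (I : finType) (c : I -> R) (v : I -> V) : linR f ->
  f (\sum_i c i *: v i) = \sum_i c i * f (v i).
Proof.
move=> h; elim/big_rec2: _ => [|i y1 y2 _ <-]; first exact: linR0.
by rewrite h.
Qed.
Lemma linR_sum' f (I : finType) (v : I -> V) : linR f ->
  f (\sum_i v i) = \sum_i f (v i).
Proof.
move=> h; elim/big_rec2: _ => [|i y1 y2 _ <-]; first exact: linR0.
by rewrite linRD.
Qed.

Lemma linV_comp f g : linV f -> linV g -> linV (f \o g).
Proof. by move=> hf hg a x y /=; rewrite hg hf. Qed.

Definition ee (k : 'I_n) : V := delta_mx 0 k.

Lemma expand (w : V) : w = \sum_k w 0 k *: ee k.
Proof. exact: row_sum_delta. Qed.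

Lemma lin1_mxP f : linV f -> forall u, u *m lin1_mx f = f u.
Proof.
move=> h u; rewrite {2}(expand u) linV_sum //; apply/rowP => j.
rewrite !mxE summxE; apply: eq_bigr => i _; rewrite !mxE; done.
Qed.

Lemma row_lin1 (f : V -> V) i : row i (lin1_mx f) = f (ee i).
Proof. by apply/rowP => j; rewrite !mxE. Qed.

Lemma lin1_mx_comp f g : linV f -> linV g -> lin1_mx (f \o g) = lin1_mx g *m lin1_mx f.
Proof.
move=> hf hg; apply/row_matrixP => i.
by rewrite row_mul !row_lin1 lin1_mxP.
Qed.
End Gen.

Section Tr.
Variables (R : realType) (n : nat).
Local Notation V := 'rV[R]_n.

Lemma trmx_idem (M : 'M[R]_n) : M *m M = M -> 0 <= \tr M.
Proof.
move=> hM.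
have [r [C [Rb [hb hC hR]]]] : exists r (C : 'M[R]_(n, r)) (Rb : 'M[R]_(r, n)),
   [/\ C *m Rb = M, row_full C & row_free Rb].
  by exists (\rank M), (col_base M), (row_base M); split;
    [exact: mulmx_base|exact: col_base_full|exact: row_base_free].
case/row_fullP: hC => X hX; case/row_freeP: hR => Y hY.
have e1 : X *m M *m M *m Y = Rb *m C.
  by rewrite -hb !mulmxA hX mul1mx -!mulmxA hY mulmx1.
have e2 : X *m M *m Y = 1%:M.
  by rewrite -hb !mulmxA hX mul1mx hY.
have e : Rb *m C = 1%:M by rewrite -e1 -[X *m M *m M]mulmxA hM e2.
rewrite -hb mxtrace_mulC e mxtrace_scalar. exact: ler0n.
Qed.

Lemma trmx_sqz (M : 'M[R]_n) : M *m M = 0 -> \tr M = 0.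
Proof.
move=> hM.
have [r [C [Rb [hb hC hR]]]] : exists r (C : 'M[R]_(n, r)) (Rb : 'M[R]_(r, n)),
   [/\ C *m Rb = M, row_full C & row_free Rb].
  by exists (\rank M), (col_base M), (row_base M); split;
    [exact: mulmx_base|exact: col_base_full|exact: row_base_free].
case/row_fullP: hC => X hX; case/row_freeP: hR => Y hY.
have e1 : X *m M *m M *m Y = Rb *m C.
  by rewrite -hb !mulmxA hX mul1mx -!mulmxA hY mulmx1.
have e : Rb *m C = 0 by rewrite -e1 -[X *m M *m M]mulmxA hM mulmx0 mul0mx.
by rewrite -hb mxtrace_mulC e mxtrace0.
Qed.

Local Notation ee := (@ee R n).
Definition trc (f : V -> V) := \tr (lin1_mx f).

Lemma lin1_mx_ext (f g : V -> V) : (forall x, f x = g x) -> lin1_mx f = lin1_mx g.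
Proof. by move=> h; apply/matrixP => i j; rewrite !mxE h. Qed.

Lemma trc_ext (f g : V -> V) : (forall x, f x = g x) -> trc f = trc g.
Proof. by move=> h; rewrite /trc (lin1_mx_ext h). Qed.

Lemma trc_comm (f g : V -> V) : linV f -> linV g -> trc (f \o g) = trc (g \o f).
Proof. by move=> hf hg; rewrite /trc (lin1_mx_comp hf hg) (lin1_mx_comp hg hf) mxtrace_mulC. Qed.

Lemma trc_idem (f : V -> V) : linV f -> (forall x, f (f x) = f x) -> 0 <= trc f.
Proof.
move=> hf h; apply: trmx_idem; rewrite -(lin1_mx_comp hf hf); exact: lin1_mx_ext.
Qed.

Lemma trc_sqz (f : V -> V) : linV f -> (forall x, f (f x) = 0) -> trc f = 0.
Proof.
move=> hf h; apply: trmx_sqz; rewrite -(lin1_mx_comp hf hf).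
rewrite (lin1_mx_ext (g := fun _ => 0)) //; apply/matrixP => i j; rewrite !mxE //.
Qed.

Lemma trcE (f : V -> V) : trc f = \sum_k f (ee k) 0 k.
Proof. by rewrite /trc /mxtrace; apply: eq_bigr => i _; rewrite mxE. Qed.
End Tr.

Section Main.
Variables (R : realType) (n : nat).
Local Notation V := 'rV[R]_n.
Local Notation ee := (@ee R n).
Variables (br : V -> V -> V) (B : V -> V -> R) (D : V -> V -> V) (lambda : R).
Hypothesis Hbr : is_lie_bracket br.
Hypothesis HB : is_nondeg_sym_form B.
Hypothesis Hnil : two_step_nilpotent br.
Hypothesis HD : is_levi_civita br B D.

Lemma BL z : linR (B^~ z).
Proof. by case: HB => h _ _ a x y; rewrite h. Qed.
Lemma BLe a x y z : B (a *: x + y) z = a * B x z + B y z.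
Proof. exact: BL. Qed.
Lemma Bsym x y : B x y = B y x.
Proof. by case: HB. Qed.
Lemma BR x : linR (B x).
Proof. by move=> a y z; rewrite !(Bsym x) BL. Qed.
Lemma Bnd x : (forall y, B x y = 0) -> x = 0.
Proof. by case: HB => _ _ H; exact: H. Qed.
Lemma Beq x y : (forall w, B x w = B y w) -> x = y.
Proof.
move=> h; apply/eqP; rewrite -subr_eq0; apply/eqP; apply: Bnd => w.
by rewrite (linRB (BL w)) h subrr.
Qed.

Lemma brL z : linV (br^~ z).
Proof. by case: Hbr => h _ _ a x y; rewrite h. Qed.
Lemma brA x y : br x y = - br y x.
Proof. by case: Hbr. Qed.
Lemma brR x : linV (br x).
Proof. by move=> a y z; rewrite !(brA x) brL opprD scalerN. Qed.
Lemma cent x y z : br (br x y) z = 0.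
Proof. by case: Hnil. Qed.
Lemma cent' x y z : br z (br x y) = 0.
Proof. by rewrite brA cent oppr0. Qed.

Definition phi (v : V) : V := \row_i B (ee i) v.
Lemma phi_lin : linV phi.
Proof. by move=> a x y; apply/rowP => i; rewrite !mxE (BR (ee i)). Qed.

Lemma phi_unit : lin1_mx phi \in unitmx.
Proof.
rewrite -row_free_unit -kermx_eq0; apply/eqP/row_matrixP => i.
rewrite row0; set u := row i _.
have hu : phi u = 0.
  by rewrite -(lin1_mxP phi_lin) /u -row_mul mulmx_ker row0.
apply: Bnd => y; rewrite Bsym (expand y) (linR_sum _ _ (BL u)).
apply: big1 => j _.
by move/rowP: hu => /(_ j); rewrite !mxE => ->; rewrite mulr0.
Qed.

Definition dd k : V := ee k *m invmx (lin1_mx phi).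

Lemma Bed i k : B (ee i) (dd k) = (ee k) 0 i.
Proof.
have : phi (dd k) = ee k by rewrite -(lin1_mxP phi_lin) /dd mulmxKV // phi_unit.
by move/rowP => /(_ i); rewrite !mxE.
Qed.

Lemma coord w k : B w (dd k) = w 0 k.
Proof.
rewrite {1}(expand w) (linR_sum _ _ (BL _)).
under eq_bigr => i _ do rewrite Bed.
rewrite (bigD1 k) //= big1 ?addr0 => [|i /negbTE ik]; rewrite !mxE ?eqxx ?mulr1 //.
by rewrite ik mulr0.
Qed.

Lemma expand' w : w = \sum_k B w (ee k) *: dd k.
Proof.
apply: Beq => y; rewrite (linR_sum _ _ (BL y)).
under eq_bigr => k _ do rewrite (Bsym (dd k)) coord.
by rewrite {1}(expand y) (linR_sum _ _ (BR w)); apply: eq_bigr => k _; rewrite mulrC.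
Qed.

Lemma swap (F : V -> V -> R) : (forall y, linR (F^~ y)) -> (forall x, linR (F x)) ->
  \sum_k F (ee k) (dd k) = \sum_k F (dd k) (ee k).
Proof.
move=> hl hr.
have ed k : dd k = \sum_j B (dd k) (dd j) *: ee j.
  by rewrite {1}(expand (dd k)); apply: eq_bigr => j _; rewrite coord.
transitivity (\sum_k \sum_j B (dd k) (dd j) * F (ee k) (ee j)).
  by apply: eq_bigr => k _; rewrite {1}ed (linR_sum _ _ (hr _)).
transitivity (\sum_k \sum_j B (dd k) (dd j) * F (ee j) (ee k)); last first.
  by apply: eq_bigr => k _; rewrite {2}ed (linR_sum _ _ (hl _)).
rewrite exchange_big /=; apply: eq_bigr => k _; apply: eq_bigr => j _.
by rewrite Bsym.
Qed.

Definition tB (f : V -> V) := \sum_k B (f (ee k)) (dd k).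
Lemma tE f : trc f = tB f.
Proof. by rewrite trcE; apply: eq_bigr => k _; rewrite coord. Qed.

Definition adj (f : V -> V) (a : V) : V := \sum_k B a (f (ee k)) *: dd k.

Lemma adjP f : linV f -> forall a b, B (adj f a) b = B a (f b).
Proof.
move=> hf a b; rewrite (linR_sum _ _ (BL b)).
under eq_bigr => k _ do rewrite (Bsym (dd k)) coord.
rewrite {2}(expand b) (linV_sum _ _ hf) (linR_sum _ _ (BR a)).
by apply: eq_bigr => k _; rewrite mulrC.
Qed.
Lemma adjP' f : linV f -> forall a b, B b (adj f a) = B (f b) a.
Proof. by move=> hf a b; rewrite Bsym adjP // Bsym. Qed.

Lemma adj_lin f : linV f -> linV (adj f).
Proof.
move=> hf a x y; apply: Beq => w.
by rewrite BLe !adjP // BLe.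
Qed.

Lemma adj0 f a : (forall x, f x = 0) -> adj f a = 0.
Proof.
move=> h; rewrite /adj big1 // => k _.
by rewrite h (linR0 (BR a)) scale0r.
Qed.

Lemma B0l y : B 0 y = 0.
Proof. exact: linR0 (BL y). Qed.
Lemma BNl x y : B (- x) y = - B x y.
Proof. exact: (linRN (BL y) x). Qed.
Lemma BNr x y : B x (- y) = - B x y.
Proof. exact: (linRN (BR x) y). Qed.

Definition Aop u := adj (br u).
Definition Jop u := fun a => adj (br a) u.

Lemma linA u : linV (Aop u).
Proof. exact: adj_lin (brR u). Qed.
Lemma AP u a b : B (Aop u a) b = B a (br u b).
Proof. exact: (adjP (brR u) a b). Qed.
Lemma JP u a b : B (Jop u a) b = B u (br a b).
Proof. exact: (adjP (brR a) u b). Qed.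
Lemma linJ u : linV (Jop u).
Proof.
move=> a x y; apply: Beq => w; rewrite BLe !JP brL.
by rewrite (BR u).
Qed.
Lemma Aparam a u u' x : Aop (a *: u + u') x = a *: Aop u x + Aop u' x.
Proof.
by apply: Beq => w; rewrite BLe !AP brL (BR x).
Qed.
Lemma Jparam a u u' x : Jop (a *: u + u') x = a *: Jop u x + Jop u' x.
Proof. exact: (adj_lin (brR x) a u u'). Qed.

Lemma K a b c : B (D a b) c = 2^-1 * (B (br a b) c - B (Aop a b) c - B (Jop a b) c).
Proof.
have h := HD a b c.
rewrite AP JP (Bsym b) (Bsym a) (brA a c) (brA b c) !BNl !opprK -h.
by field.
Qed.

Lemma KP P a b c : linV P ->
  B (P (D a b)) c = 2^-1 * (B (P (br a b)) c - B (P (Aop a b)) c - B (P (Jop a b)) c).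
Proof. by move=> hP; rewrite -!(adjP' hP c) K. Qed.

Lemma tB_ext f g : (forall x, f x = g x) -> tB f = tB g.
Proof. by move=> h; apply: eq_bigr => k _; rewrite h. Qed.
Lemma tB_N f : tB (fun x => - f x) = - tB f.
Proof. by rewrite /tB -sumrN; apply: eq_bigr => k _; rewrite BNl. Qed.
Lemma tB0 f : (forall x, f x = 0) -> tB f = 0.
Proof. by move=> h; rewrite /tB big1 // => k _; rewrite h B0l. Qed.
Lemma tB_comm f g : linV f -> linV g -> tB (f \o g) = tB (g \o f).
Proof. by move=> hf hg; rewrite -!tE trc_comm. Qed.
Lemma tB_sqz f : linV f -> (forall x, f (f x) = 0) -> tB f = 0.
Proof. by move=> hf h; rewrite -tE trc_sqz. Qed.

Lemma tB_adj f : linV f -> tB (adj f) = tB f.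
Proof.
move=> hf; rewrite /tB.
under eq_bigr => k _ do rewrite adjP //.
rewrite (swap (F := fun x y => B x (f y))).
  by apply: eq_bigr => k _; rewrite Bsym.
  by move=> y a x z; rewrite BLe.
by move=> x a y z; rewrite hf (BR x).
Qed.

Lemma AJ0 u v x : Aop u (Jop v x) = 0.
Proof. by apply: Beq => w; rewrite AP JP cent' B0l (linR0 (BR v)). Qed.
Lemma AA0 u v x : Aop u (Aop v x) = 0.
Proof. by apply: Beq => w; rewrite !AP cent' B0l (linR0 (BR x)). Qed.
Lemma Jbr0 u v x : Jop u (br v x) = 0.
Proof. by apply: adj0 => y; rewrite cent. Qed.

Lemma adjJA u v x : adj (Jop u \o Aop v) x = - br v (Jop u x).
Proof.
apply: Beq => w; rewrite (adjP (linV_comp (linJ u) (linA v))) /=.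
rewrite (Bsym x) JP brA BNr -JP (Bsym (Jop u x)) AP BNl.
by rewrite (Bsym w).
Qed.
Lemma adjAbr u v x : adj (Aop u \o br v) x = Aop v (br u x).
Proof.
apply: Beq => w; rewrite (adjP (linV_comp (linA u) (brR v))) /=.
by rewrite (Bsym x) !AP Bsym.
Qed.

Lemma tr1 u v : tB (br u \o Jop v) = 0.
Proof.
rewrite (tB_comm (brR u) (linJ v)); apply: tB0 => x; exact: Jbr0.
Qed.
Lemma tr2 u v : tB (Jop u \o Aop v) = 0.
Proof.
rewrite -(tB_adj (linV_comp (linJ u) (linA v))).
rewrite (tB_ext (adjJA u v)) tB_N.
by have := tr1 v u; rewrite /tB /= => ->; rewrite oppr0.
Qed.
Lemma tr3 u v : tB (Aop u \o br v) = tB (br u \o Aop v).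
Proof.
rewrite -(tB_adj (linV_comp (linA u) (brR v))).
rewrite (tB_ext (adjAbr u v)).
by rewrite -(tB_comm (linA v) (brR u)).
Qed.

Lemma T1 u v : \sum_k B (D (br u (ee k)) v) (dd k) = - 2^-1 * tB (Aop v \o br u).
Proof.
rewrite /tB mulr_sumr; apply: eq_bigr => k _ /=.
rewrite K cent B0l.
have -> : Aop (br u (ee k)) v = 0 by apply: adj0 => y; rewrite cent.
by rewrite B0l /Jop /Aop; ring.
Qed.

Lemma T3 x : \sum_k B (D (ee k) x) (dd k) = 0.
Proof.
have e : \sum_k B (D (ee k) x) (dd k) =
   2^-1 * (- tB (br x) - tB (Jop x) - tB (Aop x)).
  rewrite /tB -!sumrN -!big_split /= mulr_sumr; apply: eq_bigr => k _.
  by rewrite K (brA (ee k)) BNl /Jop /Aop.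
have h1 : tB (br x) = 0.
  by apply: tB_sqz (brR x) _ => y; rewrite cent'.
have h2 : tB (Aop x) = 0 by rewrite /Aop (tB_adj (brR x)) h1.
have h3 : tB (Jop x) = 0.
  have : tB (Jop x) = - tB (Jop x).
    rewrite -{1}(tB_adj (linJ x)) -tB_N; apply: tB_ext => y.
    apply: Beq => w; rewrite (adjP (linJ x)) (Bsym y) !JP BNl.
    by rewrite brA BNr JP.
  move/eqP; rewrite -subr_eq0 opprK -mulr2n -mulr_natl mulf_eq0 => /orP [|/eqP //].
  by rewrite pnatr_eq0.
by rewrite e h1 h2 h3; ring.
Qed.

Lemma T2 u v : \sum_k B (D u (D (ee k) v)) (dd k) = 4^-1 * tB (Jop u \o Jop v).
Proof.
have e : forall k, B (D u (D (ee k) v)) (dd k) =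
   4^-1 * (- B (br u (Jop v (ee k))) (dd k) - B (br u (Aop v (ee k))) (dd k)
         + B (Aop u (br v (ee k))) (dd k) + B (Jop u (Jop v (ee k))) (dd k)
         + B (Jop u (Aop v (ee k))) (dd k)).
  move=> k.
  rewrite K (KP _ _ _ (brR u)) (KP _ _ _ (linA u)) (KP _ _ _ (linJ u)).
  rewrite (brA (ee k) v) (linVN (brR u)) (linVN (linA u)) (linVN (linJ u)) !BNl.
  have -> : Aop (ee k) v = Jop v (ee k) by [].
  have -> : Jop (ee k) v = Aop v (ee k) by [].
  rewrite cent' B0l Jbr0 B0l AJ0 AA0 !B0l.
  by field.
rewrite (eq_bigr _ (fun k _ => e k)) -mulr_sumr !big_split /= !sumrN.
have := tr1 u v; have := tr2 u v; have := tr3 u v; rewrite /tB /= => -> -> ->.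
by ring.
Qed.

Lemma ricciE u v : ricci br D u v = - 2^-1 * tB (Aop v \o br u) - 4^-1 * tB (Jop u \o Jop v).
Proof.
rewrite /ricci -/(trc _) tE {1}/tB /curvature.
under eq_bigr => k _ do rewrite (linRD (BL _)) (linRB (BL _)).
rewrite !big_split /= sumrN T1 T2 T3 addr0; ring.
Qed.

Hypothesis Hric : forall u v, ricci br D u v = lambda * B u v.

Definition FF u v := tB (Aop v \o br u).
Definition SS u v := tB (Jop u \o Jop v).

Lemma Ein u v : - 2^-1 * FF u v - 4^-1 * SS u v = lambda * B u v.
Proof. by rewrite -Hric ricciE. Qed.

Definition Psi c := \sum_k br (Jop c (ee k)) (dd k).

Lemma SPsi u c : SS u c = B u (Psi c).
Proof.
rewrite /SS /tB /Psi (linR_sum' _ (BR u)); apply: eq_bigr => k _ /=.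
by rewrite JP.
Qed.

Lemma Ssym u c : SS u c = SS c u.
Proof. by rewrite /SS (tB_comm (linJ u) (linJ c)). Qed.

Lemma Psi_cent u w : br (Psi u) w = 0.
Proof.
rewrite /Psi (linV_sum' _ (brL w)) big1 // => k _; exact: cent.
Qed.

Lemma Psi_lin : linV Psi.
Proof.
move=> a x y; rewrite /Psi scaler_sumr -big_split /=; apply: eq_bigr => k _.
by rewrite Jparam brL.
Qed.

Lemma FF_cent z v : (forall w, br z w = 0) -> FF z v = 0.
Proof.
move=> h; rewrite /FF; apply: tB0 => x /=.
by rewrite h (linV0 (linA v)).
Qed.

Lemma PsiPsi u : Psi (Psi u) = (- 4 * lambda) *: Psi u.
Proof.
apply: Beq => w.
have e := Ein (Psi u) w.
rewrite FF_cent in e; last exact: Psi_cent.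
rewrite -[(- 4 * lambda) *: Psi u]addr0 BLe B0l addr0 (Bsym (Psi (Psi u))) -SPsi Ssym.
have -> : SS (Psi u) w = - 4 * (- 2^-1 * 0 - 4^-1 * SS (Psi u) w) by field.
by rewrite e; ring.
Qed.

Lemma FF_linl v : linR (FF^~ v).
Proof.
move=> a x y; rewrite /FF /tB mulr_sumr -big_split /=; apply: eq_bigr => k _.
by rewrite brL (linA v) BLe.
Qed.
Lemma FF_linr u : linR (FF u).
Proof.
move=> a x y; rewrite /FF /tB mulr_sumr -big_split /=; apply: eq_bigr => k _.
by rewrite Aparam BLe.
Qed.

Lemma sumSF : \sum_k SS (ee k) (dd k) = - \sum_k FF (ee k) (dd k).
Proof.
transitivity (\sum_k \sum_i B (ee k) (br (Aop (ee i) (dd k)) (dd i))).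
  by apply: eq_bigr => k _; rewrite /SS /tB; apply: eq_bigr => i _; rewrite /= JP.
rewrite exchange_big /=.
transitivity (- \sum_i FF (dd i) (ee i)); last first.
  congr (- _); apply/esym; apply: swap; [exact: FF_linl | exact: FF_linr].
rewrite -sumrN; apply: eq_bigr => i _.
rewrite (swap (F := fun x y => B x (br (Aop (ee i) y) (dd i)))); last first.
- by move=> x a y z; rewrite (linA (ee i)) brL (BR x).
- by move=> y a x z; rewrite BLe.
rewrite /FF -(tB_comm (brR (dd i)) (linA (ee i))) /tB -sumrN; apply: eq_bigr => k _ /=.
by rewrite Bsym brA BNl.
Qed.

Lemma trPsi : tB Psi = 4 * lambda * n%:R.
Proof.
have hs : \sum_k ricci br D (ee k) (dd k) = lambda * n%:R.
  under eq_bigr => k _ do rewrite Hric coord !mxE !eqxx /= mulr1.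
  by rewrite sumr_const card_ord mulr_natr.
have hf : \sum_k ricci br D (ee k) (dd k) = - 4^-1 * \sum_k FF (ee k) (dd k).
  under eq_bigr => k _ do rewrite ricciE -/(FF _ _) -/(SS _ _).
  rewrite big_split /= sumrN -!mulr_sumr sumSF; by field.
have -> : tB Psi = \sum_k SS (ee k) (dd k).
  by apply: eq_bigr => k _; rewrite Ssym SPsi Bsym.
rewrite sumSF.
have : - 4^-1 * \sum_k FF (ee k) (dd k) = lambda * n%:R by rewrite -hf.
move=> h; have -> : \sum_k FF (ee k) (dd k) = - 4 * (- 4^-1 * \sum_k FF (ee k) (dd k)) by field.
by rewrite h; ring.
Qed.

Lemma lambda0 : lambda = 0.
Proof.
apply/eqP; apply/negPn/negP => hl.
have h4 : - 4 * lambda != 0 by rewrite mulf_eq0 negb_or oppr_eq0 pnatr_eq0.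
set c := (- 4 * lambda)^-1.
pose P x := c *: Psi x.
have Plin : linV P.
  by move=> a x y; rewrite /P Psi_lin scalerDr !scalerA mulrC.
have Pid : forall x, P (P x) = P x.
  move=> x; rewrite /P (linVZ Psi_lin) PsiPsi !scalerA.
  by rewrite /c -mulrA mulVf // mulr1.
have := trc_idem Plin Pid; rewrite tE.
have -> : tB P = c * tB Psi.
  by rewrite /tB mulr_sumr; apply: eq_bigr => k _; rewrite /P -[c *: _]addr0 BLe B0l addr0.
rewrite trPsi /c.
have -> : (- 4 * lambda)^-1 * (4 * lambda * n%:R) = - (n%:R : R) by field.
move=> hn; have : (n%:R : R) == 0 by rewrite eq_le ler0n andbT -oppr_ge0.
rewrite pnatr_eq0 => /eqP n0.
case: Hnil => [[x [y hxy]] _].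
suff : br x y = 0 by move=> e; rewrite e eqxx in hxy.
by apply/rowP => i; have := ltn_ord i; rewrite {2}n0.
Qed.
End Main.

Unset Implicit Arguments.
Theorem mainTheorem6 (R : realType) (n : nat)
  (br : 'rV[R]_n -> 'rV[R]_n -> 'rV[R]_n) (B : 'rV[R]_n -> 'rV[R]_n -> R)
  (D : 'rV[R]_n -> 'rV[R]_n -> 'rV[R]_n) (lambda : R) :
  is_lie_bracket br ->
  is_nondeg_sym_form B ->
  two_step_nilpotent br ->
  is_levi_civita br B D ->
  (forall u v : 'rV[R]_n, ricci br D u v = lambda * B u v) ->
  lambda = 0.
Proof.
move=> h1 h2 h3 h4 h5; exact: (lambda0 h1 h2 h3 h4 h5).
Qed.
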